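(* Let $G^\sigma$ be a connected oriented unicyclic graph of order $n$ with girth $k<n$, and let $C_k^\sigma$ be its cycle. (1) If $G^\sigma\in\mathscr{U}_1$, then $sr(G^\sigma)\leq n$ if $n$ is even and $sr(G^\sigma)\leq n-1$ if $n$ is odd. (2) If $G^\sigma\in\mathscr{U}_2$, then $sr(G^\sigma)\leq n-1$ if $n$ and $k$ are odd; $\leq n-2$ if $n$ is even and $k$ is odd; $\leq n$ if $n$ is even and $C_k^\sigma$ is oddly-oriented; $\leq n-1$ if $n$ is odd and $C_k^\sigma$ is oddly-oriented; $\leq n-2$ if $n$ is even and $C_k^\sigma$ is evenly-oriented; $\leq n-3$ if $n$ is odd and $C_k^\sigma$ is evenly-oriented.
   Context: An oriented graph $G^\sigma$ is a simple graph with an orientation of each edge. Its skew-adjacency matrix $S(G^\sigma)=(s_{ij})$ has $s_{ij}=1$ if there is an arc from $v_i$ to $v_j$, $s_{ij}=-1$ if there is an arc from $v_j$ to $v_i$, and $0$ otherwise; $sr(G^\sigma)$ is its rank. For an even cycle $u_1\cdots u_ku_1$, its sign is the sign of $\prod_{i=1}^k s_{u_iu_{i+1}}$ ($u_{k+1}=u_1$); it is evenly-oriented if the sign is positive, oddly-oriented if negative. A $\delta$-transformation deletes a pendant vertex (a vertex of degree one) together with its unique neighbor and all incident edges. $\mathscr{U}_1$ is the set of oriented unicyclic graphs of order $n$ with girth $k$ that can be transformed into a graph without edges by finitely many $\delta$-transformations; $\mathscr{U}_2$ is the set of those that can be transformed into the oriented cycle $C_k^\sigma$, or the disjoint union of $C_k^\sigma$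 with isolated vertices, by finitely many $\delta$-transformations. *)

(* Defs.v *)
From HB Require Import structures.
From mathcomp Require Import all_boot all_order all_algebra.
From Stdlib Require Import Relations.
Set Implicit Arguments. Unset Strict Implicit. Unset Printing Implicit Defensive.
Import Order.TTheory GRing.Theory Num.Theory.
Local Open Scope ring_scope.

Definition oriented (n : nat) (a : rel 'I_n) : Prop :=
  (forall i, ~~ a i i) /\ (forall i j, a i j -> ~~ a j i).

Definition uedge (n : nat) (a : rel 'I_n) : rel 'I_n := fun i j => a i j || a j i.

Definition skew (n : nat) (a : rel 'I_n) : 'M[rat]_n :=
  \matrix_(i, j) (if a i j then 1 else if a j i then -1 else 0).

Definition sr (n : nat) (a : rel 'I_n) : nat := \rank (skew a).

Definition connected_graph (n : nat) (a : rel 'I_n) : Prop :=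
  forall x y, connect (uedge a) x y.

(* connected with exactly n edges (= n arcs, one per edge) *)
Definition unicyclic (n : nat) (a : rel 'I_n) : Prop :=
  connected_graph a /\ #|[set p : 'I_n * 'I_n | a p.1 p.2]| = n.

Definition is_cycle (n : nat) (a : rel 'I_n) (c : seq 'I_n) : Prop :=
  [/\ (3 <= size c)%N, uniq c & cycle (uedge a) c].

Definition girth (n : nat) (a : rel 'I_n) (k : nat) : Prop :=
  (exists c, is_cycle a c /\ size c = k) /\
  (forall c, is_cycle a c -> (k <= size c)%N).

Definition cycle_prod (n : nat) (a : rel 'I_n) (c : seq 'I_n) : rat :=
  \prod_(x <- c) skew a x (next c x).

Definition evenly_oriented (n : nat) (a : rel 'I_n) (c : seq 'I_n) : Prop :=
  ~~ odd (size c) /\ 0 < cycle_prod a c.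

Definition oddly_oriented (n : nat) (a : rel 'I_n) (c : seq 'I_n) : Prop :=
  ~~ odd (size c) /\ cycle_prod a c < 0.

(* The current graph is the subgraph induced by the remaining vertex set V. *)
Definition delta_step (n : nat) (a : rel 'I_n) (V W : {set 'I_n}) : Prop :=
  exists u v, [/\ u \in V, [set w in V | uedge a u w] = [set v]
                 & W = V :\: [set u; v]].

Definition delta_reach (n : nat) (a : rel 'I_n) (W : {set 'I_n}) : Prop :=
  clos_refl_trans _ (delta_step a) [set: 'I_n] W.

Definition in_U1 (n : nat) (a : rel 'I_n) : Prop :=
  exists W, delta_reach a W /\
    (forall x y, x \in W -> y \in W -> ~~ uedge a x y).

(* U_2: transformable into the cycle C (given by c), possibly together with
   isolated vertices: the remaining set contains the cycle, and the edges of
   the remaining induced subgraph are exactly the edges of the cycle. *)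
Definition in_U2 (n : nat) (a : rel 'I_n) (c : seq 'I_n) : Prop :=
  exists W, [/\ delta_reach a W, {subset c <= W} &
    (forall x y, x \in W -> y \in W ->
       (uedge a x y <->
        [&& x \in c, y \in c & (y == next c x) || (x == next c y)]))].

(* Main.v *)
Require Import Defs.
From HB Require Import structures.
From mathcomp Require Import all_boot all_order all_algebra.
From Stdlib Require Import Relations Lia.
From mathcomp Require Import zify.
Import Order.TTheory GRing.Theory Num.Theory.

Module Helpers.
Set Implicit Arguments. Unset Strict Implicit. Unset Printing Implicit Defensive.
Local Open Scope ring_scope.

Lemma odd_skew_rank m (M : 'M[rat]_m) : M^T = - M -> odd m -> (\rank M <= m.-1)%N.
Proof.
move=> hT hm.
have hd : \det M = 0.
  have := det_tr M; rewrite hT -scaleN1r detZ -signr_odd hm expr1 mulN1r.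
  move=> /eqP; rewrite eq_sym -addr_eq0 -mulr2n -mulr_natr mulf_eq0 => /orP[/eqP //|].
  by rewrite pnatr_eq0.
have : M \notin unitmx by rewrite unitmxE hd unitr0.
rewrite -row_free_unit /row_free => /eqP hne.
have := rank_leq_row M; case: m M hT hm hne {hd} => //= m M _ _ hne.
by rewrite leq_eqVlt => /orP[/eqP|//].
Qed.

Section G.
Variables (n : nat) (a : rel 'I_n).
Hypothesis ho : oriented a.

Lemma skew_anti (x y : 'I_n) : Defs.skew a y x = - Defs.skew a x y.
Proof.
case: ho => h1 h2; rewrite /Defs.skew !mxE.
case hxy: (a x y); case hyx: (a y x) => //=; rewrite ?opprK ?oppr0 //.
by move: (h2 _ _ hxy); rewrite hyx.
Qed.

Lemma skew_tr : (Defs.skew a)^T = - Defs.skew a.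
Proof. by apply/matrixP => i j; rewrite mxE [RHS]mxE (skew_anti i j). Qed.

Lemma skew0 (x y : 'I_n) : ~~ uedge a x y -> Defs.skew a x y = 0.
Proof. by rewrite /uedge /Defs.skew mxE; case: (a x y); case: (a y x). Qed.

Lemma skew_diag (x : 'I_n) : Defs.skew a x x = 0.
Proof. by apply: skew0; case: ho => h1 _; rewrite /uedge orbb h1. Qed.

Lemma skew_pm (x y : 'I_n) : uedge a x y -> Defs.skew a x y * Defs.skew a x y = 1.
Proof.
rewrite /uedge /Defs.skew mxE => /orP[->|h]; first by rewrite mulr1.
case: (a x y); first by rewrite mulr1.
by rewrite h mulrNN mulr1.
Qed.

Lemma uedgeC (x y : 'I_n) : uedge a x y = uedge a y x.
Proof. by rewrite /uedge orbC. Qed.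

Definition SVm (S : 'M[rat]_n) (V : {set 'I_n}) : 'M[rat]_n :=
  \matrix_(i, j) if (i \in V) && (j \in V) then S i j else 0.
Definition SV V := SVm (Defs.skew a) V.

Lemma SVT : SV setT = Defs.skew a.
Proof. by apply/matrixP => i j; rewrite /SV /SVm mxE !inE. Qed.

Lemma rank_col (m : nat) (A : 'M[rat]_(m, 1)) (B : 'M[rat]_(1, m)) :
  (\rank (A *m B) <= 1)%N.
Proof. exact: mulmx_max_rank. Qed.

Lemma SVm_decomp (S : 'M[rat]_n) (V : {set 'I_n}) (u v : 'I_n) :
  (forall x, S x x = 0) -> u \in V -> v \in V ->
  (forall w, w \in V -> w != v -> S u w = 0 /\ S w u = 0) ->
  SVm S V = SVm S (V :\: [set u; v]) +
     (col v (SVm S V) *m (\row_j (if j == v then 1 else 0) : 'rV[rat]_n)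
      + (\row_j (if j == v then 1 else 0) : 'rV[rat]_n)^T *m row v (SVm S V)).
Proof.
move=> hd uV vV hp.
apply/matrixP => x y; rewrite !mxE !big_ord1 !mxE !inE.
case: (eqVneq x v) => [->|xv].
  by rewrite orbT /= vV hd mul0r mul1r !add0r.
rewrite mul0r addr0 orbF.
case: (eqVneq y v) => [->|yv].
  by rewrite orbT andbF /= mulr1 add0r.
rewrite mulr0 addr0 orbF.
case: (eqVneq x u) => [->|xu] /=.
  case yV: (y \in V); rewrite ?andbF //= uV.
  by case: (hp _ yV yv) => ->.
case: (eqVneq y u) => [->|yu] /=; rewrite ?andbF ?andbT //.
case xV: (x \in V); rewrite //= uV.
by case: (hp _ xV xv) => _ ->.
Qed.

Lemma step_rank V W : delta_step a V W ->
  #|V| = (#|W| + 2)%N /\ (\rank (SV V) <= \rank (SV W) + 2)%N.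
Proof.
case=> u [v [uV hN ->]].
have vN : v \in [set w in V | uedge a u w] by rewrite hN set11.
rewrite inE in vN; case/andP: vN => vV uv.
have huv : u != v.
  apply/eqP=> e; move: uv; rewrite e /uedge orbb.
  by case: ho => h1 _; rewrite (negbTE (h1 v)).
have hp w : w \in V -> uedge a u w -> w = v.
  move=> wV uw; have : w \in [set w in V | uedge a u w] by rewrite inE wV.
  by rewrite hN inE => /eqP.
split.
  rewrite (cardsD1 u V) uV (cardsD1 v (V :\ u)) !inE eq_sym huv vV /=.
  by rewrite setDDl !add1n addn2.
rewrite /SV (@SVm_decomp _ V u v) //; last first.
  move=> w wV wv.
  have nu : ~~ uedge a u w.
    by apply/negP => /(hp _ wV) ew; rewrite ew eqxx in wv.
  by rewrite !skew0 // uedgeC.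
  exact: skew_diag.
apply: (leq_trans (mxrank_add _ _)); rewrite leq_add2l.
apply: (leq_trans (mxrank_add _ _)).
by rewrite -[2%N]/(1 + 1)%N leq_add ?rank_col.
Qed.
End G.

Lemma reach_rank n (a : rel 'I_n) (W : {set 'I_n}) : oriented a -> delta_reach a W ->
  exists m, n = (#|W| + 2 * m)%N /\ (sr a <= \rank (SV a W) + 2 * m)%N.
Proof.
move=> ho /clos_rt_rtn1_iff; elim=> [|V W' hs _ [m [hn hr]]].
  by exists 0%N; rewrite muln0 !addn0 cardsT card_ord /sr SVT.
have [hc hrk] := step_rank ho hs.
exists m.+1; split; first by apply: (etrans hn); rewrite hc mulnS addnA.
apply: (leq_trans hr); rewrite mulnS addnA leq_add2r.
by [].
Qed.

Section C.
Variables (n : nat) (a : rel 'I_n) (c : seq 'I_n) (d : 'I_n).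
Hypotheses (ho : oriented a) (hu : uniq c) (hk : (3 <= size c)%N).
Hypothesis hcyc : cycle (uedge a) c.
Hypothesis hch : forall x y, x \in c -> y \in c -> uedge a x y ->
  (y == next c x) || (x == next c y).

Local Notation k := (size c).
Definition cv i := nth d c i.
Definition s i j := Defs.skew a (cv i) (cv j).
Definition nx i := if i.+1 == k then 0%N else i.+1.
Definition pv i := if i == 0%N then k.-1 else i.-1.

Lemma nx_lt i : (i < k)%N -> (nx i < k)%N.
Proof.
rewrite /nx; case: eqP => [_|h] hi; first by apply: leq_trans hk.
by rewrite ltn_neqAle hi andbT; apply/eqP.
Qed.

Lemma pv_lt i : (i < k)%N -> (pv i < k)%N.
Proof.
rewrite /pv; case: eqP => [_|h] hi; first by rewrite prednK // (leq_trans _ hk).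
by apply: leq_ltn_trans hi; apply: leq_pred.
Qed.

Lemma cv_inj i j : (i < k)%N -> (j < k)%N -> cv i = cv j -> i = j.
Proof. by move=> hi hj /eqP; rewrite /cv nth_uniq // => /eqP. Qed.

Lemma next_cv i : (i < k)%N -> next c (cv i) = cv (nx i).
Proof.
move=> hi; rewrite next_nth /cv mem_nth // index_uniq //.
move: hi hu; rewrite /nx; case: c => [//|y p'] /= hi _.
case: eqP => [e|ne].
  by case: e => ->; rewrite nth_default.
have hi' : (i < size p')%N by rewrite ltn_neqAle -ltnS hi andbT; apply/eqP => e; apply: ne; rewrite e.
exact: set_nth_default.
Qed.

Lemma s_nz i j : (i < k)%N -> (j < k)%N -> s i j != 0 -> j = nx i \/ i = nx j.
Proof.
move=> hi hj hs.
have he : uedge a (cv i) (cv j).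
  by apply/negPn/negP => he; move: hs; rewrite /s skew0 ?eqxx.
case/orP: (hch (mem_nth _ hi) (mem_nth _ hj) he); rewrite next_cv // => /eqP /cv_inj.
  by move=> h; left; apply: h => //; apply: nx_lt.
by move=> h; right; apply: h => //; apply: nx_lt.
Qed.

Lemma nx_pv i j : (i < k)%N -> (j < k)%N -> i = nx j -> j = pv i.
Proof.
move=> hi hj ->; rewrite /nx; case: eqP => [e|ne]; rewrite /pv /=.
  by rewrite -e.
by [].
Qed.

Lemma pv_nx i : (i < k)%N -> nx (pv i) = i.
Proof.
move=> hi; rewrite /pv; case: eqP => [->|ne]; rewrite /nx.
  by rewrite prednK ?eqxx // (leq_trans _ hk).
rewrite prednK ?lt0n; last by apply/eqP.
by rewrite ifN_eq // neq_ltn hi.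
Qed.

Definition av i := s i (nx i).

Lemma av2 i : (i < k)%N -> av i * av i = 1.
Proof.
move=> hi; rewrite /av /s -next_cv //; apply: skew_pm => //.
by apply: next_cycle hcyc _; apply: mem_nth.
Qed.

Definition p j := \prod_(0 <= m < j) av m.

Lemma pS j : p j.+1 = p j * av j.
Proof. by rewrite /p big_nat_recr. Qed.

Lemma p0 : p 0 = 1.
Proof. by rewrite /p big_geq. Qed.

Lemma p2 j : (j <= k)%N -> p j * p j = 1.
Proof.
elim: j => [|j IH] hj; first by rewrite p0 mulr1.
rewrite pS mulrACA IH ?(ltnW hj) // mul1r av2 //.
Qed.

Lemma pk_one : 0 < p k -> p k = 1.
Proof.
move=> hp; have h := p2 (leqnn k).
have : (p k - 1) * (p k + 1) == 0.
  by rewrite mulrDr mulr1 mulrBl mul1r h addrA subrK subrr.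
rewrite mulf_eq0 subr_eq0 => /orP[/eqP //|].
rewrite addr_eq0 => /eqP e; move: hp; rewrite e.
by rewrite oppr_gt0 ltr10.
Qed.

Section Even.
Hypothesis hpk : p k = 1.

Lemma L1 i : (i < k)%N -> av i * p (nx i) = p i.
Proof.
move=> hi; rewrite /nx; case: eqP => [e|ne].
  rewrite p0 mulr1.
  have : p i * av i = 1 by rewrite -pS e.
  move=> h; rewrite -[av i]mul1r -(p2 (ltnW hi)) -mulrA h mulr1 //.
by rewrite pS mulrCA av2 // mulr1.
Qed.

Lemma L2 i : (i < k)%N -> av (pv i) * p (pv i) = p i.
Proof.
move=> hi; rewrite /pv; case: eqP => [->|ne].
  by rewrite mulrC -pS prednK ?hpk ?p0 // (leq_trans _ hk).
by rewrite mulrC -pS prednK // lt0n; apply/eqP.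
Qed.

Lemma odd_nx_pv i : ~~ odd k -> (i < k)%N -> odd (nx i) = odd (pv i).
Proof. move=> hke hi; rewrite /nx /pv; case: eqP; case: eqP => //=; lia. Qed.

Lemma nx_neq_pv i : (i < k)%N -> nx i <> pv i.
Proof. move=> hi; rewrite /nx /pv; case: eqP; case: eqP => //=; lia. Qed.

Definition T : 'M[rat]_k := \matrix_(i, j) s i j.
Definition Fm : 'M[rat]_(k, 2) :=
  \matrix_(j, b) (if odd j == odd b then p j * p b else 0).

Lemma s_anti i j : s j i = - s i j.
Proof. exact: skew_anti. Qed.

Lemma TF0 : ~~ odd k -> T *m Fm = 0.
Proof.
move=> hke; apply/matrixP => i b; rewrite !mxE.
have hi := ltn_ord i.
pose j1 : 'I_k := Ordinal (nx_lt hi).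
pose j2 : 'I_k := Ordinal (pv_lt hi).
have h12 : j2 != j1.
  by apply/eqP => /(congr1 val) /= e; apply: (nx_neq_pv hi); rewrite e.
rewrite (bigD1 j1) // (bigD1 j2) //= big1 ?addr0; last first.
  move=> j /andP[hj1 hj2]; rewrite !mxE.
  case: (eqVneq (s i j) 0) => [->|hs]; first by rewrite mul0r.
  case: (s_nz hi (ltn_ord j) hs) => e.
    by move: hj1; rewrite (_ : j = j1) ?eqxx //; apply: val_inj; exact: e.
  by move: hj2; rewrite (_ : j = j2) ?eqxx //; apply: val_inj; exact: (nx_pv hi (ltn_ord j) e).
rewrite !mxE /= odd_nx_pv //.
have e2 : s i (pv i) = - av (pv i) by rewrite /av pv_nx // s_anti.
rewrite e2; case: ifP => _; last by rewrite !mulr0 addr0.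
rewrite mulNr !mulrA L1 // L2 // subrr //.
Qed.

Definition Gm : 'M[rat]_(2, k) := \matrix_(b, j) (if (j : nat) == b then 1 else 0).

Lemma rankF : (2 <= \rank Fm)%N.
Proof.
have h2 : (1 < k)%N by apply: leq_trans hk.
apply: (@mulmx1_min_rank _ 2 k 2 Fm Gm 1%:M).
rewrite mulmx1; apply/matrixP => b b'; rewrite !mxE.
have hb : (b < k)%N by apply: leq_trans (ltn_ord b) _.
rewrite (bigD1 (Ordinal hb)) //= big1 ?addr0.
  rewrite /Gm !mxE eqxx mul1r.
  case: b b' hb => [[|[|//]] hb] [[|[|//]] hb'] _ /=;
    rewrite ?eqxx ?p0 ?mulr1 ?p2 // (ltnW h2) //.
move=> j hj; rewrite /Gm mxE ifN ?mul0r //; apply: contra hj => /eqP e.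
Qed.

Lemma rankT_even : ~~ odd k -> (\rank T <= k - 2)%N.
Proof.
move=> hke; have := mulmx0_rank_max (TF0 hke); have := rankF; lia.
Qed.
End Even.

Lemma T_tr : T^T = - T.
Proof. by apply/matrixP => i j; rewrite !mxE s_anti. Qed.

Lemma rankT_odd : odd k -> (\rank T <= k.-1)%N.
Proof. by move=> h; apply: odd_skew_rank => //; exact: T_tr. Qed.

Lemma cycle_prod_p : cycle_prod a c = p k.
Proof.
rewrite /cycle_prod (big_nth d) /p; apply: eq_big_nat => i /andP[_ hi].
by rewrite next_cv.
Qed.

Definition Pm : 'M[rat]_(k, n) := \matrix_(i, x) (if x == cv i then 1 else 0).

Lemma sum_sel (f : 'I_k -> rat) x (i0 : 'I_k) : cv i0 = x ->
  \sum_i Pm^T x i * f i = f i0.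
Proof.
move=> e; under eq_bigr => i _ do rewrite [Pm^T _ _]mxE. rewrite (bigD1 i0) //= /Pm mxE e eqxx mul1r big1 ?addr0 //.
move=> i hi; rewrite mxE ifN ?mul0r //; apply: contra hi => /eqP h.
apply/eqP/val_inj; apply: cv_inj; [exact: ltn_ord | exact: ltn_ord | by rewrite e h].
Qed.

Lemma sum_sel0 (f : 'I_k -> rat) x : x \notin c -> \sum_i Pm^T x i * f i = 0.
Proof.
move=> hx; under eq_bigr => i _ do rewrite [Pm^T _ _]mxE. rewrite big1 // => i _; rewrite /Pm mxE ifN ?mul0r //.
by apply: contra hx => /eqP ->; apply: mem_nth.
Qed.

Lemma SV_T (W : {set 'I_n}) : {subset c <= W} ->
  (forall x y, x \in W -> y \in W -> uedge a x y -> (x \in c) && (y \in c)) ->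
  (\rank (SV a W) <= \rank T)%N.
Proof.
move=> hsub hW.
have -> : SV a W = Pm^T *m T *m Pm.
  apply/matrixP => x y; rewrite /SV /SVm [LHS]mxE.
  rewrite [RHS]mxE.
  have hz : ~~ ((x \in c) && (y \in c)) ->
      (if (x \in W) && (y \in W) then Defs.skew a x y else 0) = 0.
    move=> hn; case: ifP => // /andP[xW yW]; apply: skew0 => //.
    by apply: contra hn; apply: hW.
  case xc: (x \in c); last first.
    rewrite hz ?xc // big1 // => j _.
    by rewrite [(Pm^T *m T) _ _]mxE sum_sel0 ?xc // mul0r.
  have tr : forall j, Pm j y = Pm^T y j by move=> j; rewrite [RHS]mxE.
  have hx : (index x c < k)%N by rewrite index_mem.
  have ex : cv (Ordinal hx) = x by rewrite /cv nth_index.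
  under eq_bigr => j _ do rewrite [(Pm^T *m T) _ _]mxE (sum_sel _ ex) mulrC tr.
  case yc: (y \in c); last by rewrite hz ?xc ?yc // sum_sel0 ?yc.
  have hy : (index y c < k)%N by rewrite index_mem.
  have ey : cv (Ordinal hy) = y by rewrite /cv nth_index.
  by rewrite (sum_sel _ ey) !hsub // /T [RHS]mxE /s ex ey.
by apply: (leq_trans (mxrankM_maxl _ _)); apply: mxrankM_maxr.
Qed.
End C.

End Helpers.
Import Helpers.

Theorem theorem5p1 (n : nat) (a : rel 'I_n) (c : seq 'I_n) (k : nat) :
  oriented a -> unicyclic a -> is_cycle a c -> size c = k -> girth a k ->
  (k < n)%N ->
  (in_U1 a ->
     (~~ odd n -> (sr a <= n)%N) /\ (odd n -> (sr a <= n - 1)%N)) /\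
  (in_U2 a c ->
     ((odd n -> odd k -> (sr a <= n - 1)%N) /\
         ((~~ odd n -> odd k -> (sr a <= n - 2)%N) /\
         ((~~ odd n -> oddly_oriented a c -> (sr a <= n)%N) /\
         ((odd n -> oddly_oriented a c -> (sr a <= n - 1)%N) /\
         ((~~ odd n -> evenly_oriented a c -> (sr a <= n - 2)%N) /\
         (odd n -> evenly_oriented a c -> (sr a <= n - 3)%N))))))).
Proof.
move=> ho _ [hk3 hu hcyc] hsz _ hkn.
have hle : (sr a <= n)%N by apply: rank_leq_row.
have hodd : odd n -> (sr a <= n - 1)%N.
  by move=> hn; rewrite subn1; apply: odd_skew_rank => //; apply: skew_tr.
split; first by move=> _; split.
case=> W [hre hsub hchW].
have d : 'I_n := Ordinal (leq_ltn_trans (leq0n k) hkn).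
have hch : forall x y, x \in c -> y \in c -> uedge a x y ->
    (y == next c x) || (x == next c y).
  move=> x y xc yc /(hchW x y (hsub x xc) (hsub y yc)) /and3P[_ _ //].
have hW : forall x y, x \in W -> y \in W -> uedge a x y -> (x \in c) && (y \in c).
  by move=> x y xW yW /(hchW x y xW yW) /and3P[-> ->].
have [m [hnm hr]] := reach_rank ho hre.
have hST := SV_T d hu hsub hW.
have hkW : (k <= #|W|)%N.
  rewrite -hsz -(card_uniqP hu); apply: subset_leq_card; apply/subsetP => x.
  exact: hsub.
have hTo : odd k -> (\rank (T a c d) <= k.-1)%N.
  by move=> hk; rewrite -hsz; apply: rankT_odd => //; rewrite hsz.
have hTe : evenly_oriented a c -> (\rank (T a c d) <= k - 2)%N.
  case=> hke hpos; rewrite -hsz; apply: (rankT_even ho hu hk3 hcyc hch) => //.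
  by apply: (pk_one hu hcyc); rewrite -(cycle_prod_p a d hu).
split; first by move=> hn _; apply: hodd.
split.
  move=> hne hk; have := hTo hk; lia.
split; first by move=> _ _.
split; first by move=> hn _; apply: hodd.
split.
  move=> hne he; have := hTe he; case: he => hke _; rewrite hsz in hke; lia.
move=> hne he; have := hTe he; case: he => hke _; rewrite hsz in hke; lia.
Qed.
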